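(* Consider the ODE system \[ \dot S = -\kappa\rho S(\pi_1 W_1+\pi_2 W_2),\quad \dot I = \kappa\rho S(\pi_1 W_1+\pi_2 W_2)-\gamma I,\quad \dot R = \gamma I, \] \[ \dot W_1 = \alpha\eta I+\delta_2 W_2-(\xi_1+\delta_1)W_1,\quad \dot W_2 = \alpha(1-\eta) I+\delta_1 W_1-(\xi_2+\delta_2)W_2, \] with parameters $\kappa,\rho,\pi_1,\pi_2,\gamma,\alpha,\xi_1,\xi_2>0$, $\delta_1,\delta_2\ge 0$, $0\le\eta\le 1$, and total population $N$, with disease-free equilibrium $(S,I,R,W_1,W_2)=(N,0,0,0,0)$. Let $\tau_i=1/(\xi_i+\delta_i)$ and $\phi_i=\delta_i/(\xi_i+\delta_i)$ for $i=1,2$. Then the basic reproduction number of this system, computed by the next generation method, is \[ \mathcal{R}_0=\frac{\alpha\kappa\rho N}{\gamma}\left(\pi_1\tau_1\,\frac{\eta+(1-\eta)\phi_2}{1-\phi_1\phi_2}+\pi_2\tau_2\,\frac{(1-\eta)+\eta\phi_1}{1-\phi_1\phi_2}\right). \]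
   Context: The next generation method: with infected compartments ordered $(I,W_1,W_2)$, let $F$ be the Jacobian at the disease-free equilibrium of the new-infection terms, namely the term $\kappa\rho S(\pi_1W_1+\pi_2W_2)$ in the $I$ equation (all other entries zero), and let $V$ be the Jacobian at the disease-free equilibrium of the remaining transition terms (so the infected subsystem linearization is $F-V$, with shedding $\alpha\eta I,\alpha(1-\eta)I$, conversions $\delta_i W_i$, removals and recovery all placed in $V$). Then $\mathcal{R}_0$ is the spectral radius of $FV^{-1}$. Here $S,I,R$ are numbers of susceptible, infectious, recovered people and $W_1,W_2$ are environmental concentrations of labile and persistent pathogens. *)

(* Defs.v *)
From HB Require Import structures.
From mathcomp Require Import all_boot all_order all_algebra.
From mathcomp Require Import complex.
Set Implicit Arguments. Unset Strict Implicit. Unset Printing Implicit Defensive.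
Import Order.TTheory GRing.Theory Num.Theory.
Local Open Scope ring_scope.
Local Open Scope complex_scope.

(* Real coefficients embedded in the algebraically closed field R[i]. *)
Definition cmx (R : rcfType) (m n : nat) (A : 'M[R]_(m, n)) : 'M[R[i]]_(m, n) :=
  map_mx (fun x => x%:C) A.

Definition is_spectral_radius (R : rcfType) (n : nat) (A : 'M[R]_n) (r : R) : Prop :=
  (exists2 l : R[i], eigenvalue (cmx A) l & `|l| = r%:C) /\
  (forall l : R[i], eigenvalue (cmx A) l -> `|l| <= r%:C).

(* Infected compartments ordered (I, W1, W2); index 0 = I, 1 = W1, 2 = W2. *)
(* F: Jacobian at the DFE (S = N) of the new-infection term
   kappa rho S (pi1 W1 + pi2 W2) in the I equation. *)
Definition Fmx (R : rcfType) (kappa rho pi1 pi2 N : R) : 'M[R]_3 :=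
  \matrix_(i < 3, j < 3)
    match nat_of_ord i, nat_of_ord j with
    | 0, 1 => kappa * rho * N * pi1
    | 0, 2 => kappa * rho * N * pi2
    | _, _ => 0
    end.

(* V: Jacobian at the DFE of the remaining transition terms, with sign
   convention so that the linearization of the infected subsystem is F - V. *)
Definition Vmx (R : rcfType) (gamma alpha eta xi1 xi2 delta1 delta2 : R) : 'M[R]_3 :=
  \matrix_(i < 3, j < 3)
    match nat_of_ord i, nat_of_ord j with
    | 0, 0 => gamma
    | 1, 0 => - (alpha * eta)
    | 1, 1 => xi1 + delta1
    | 1, 2 => - delta2
    | 2, 0 => - (alpha * (1 - eta))
    | 2, 1 => - delta1
    | 2, 2 => xi2 + delta2
    | _, _ => 0
    end.

Definition is_R0 (R : rcfType)
  (kappa rho pi1 pi2 gamma alpha eta xi1 xi2 delta1 delta2 N r : R) : Prop :=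
  is_spectral_radius (Fmx kappa rho pi1 pi2 N
                      *m invmx (Vmx gamma alpha eta xi1 xi2 delta1 delta2)) r.

(* Main.v *)
Require Import Defs.
From HB Require Import structures.
From mathcomp Require Import all_boot all_order all_algebra.
From mathcomp Require Import complex.
From mathcomp Require Import ring lra.
Import Order.TTheory GRing.Theory Num.Theory.
Local Open Scope ring_scope.

Lemma eig_row0 (C : fieldType) (A : 'M[C]_3) :
  (forall i j, i != 0 -> A i j = 0) ->
  forall l, eigenvalue A l = (l == 0) || (l == A 0 0).
Proof.
move=> hA l.
rewrite /eigenvalue /eigenspace kermx_eq0 row_free_unit unitmxE unitfE negbK.
rewrite -det_tr det_trig; last first.
  apply/forallP => i; apply/forallP => j; apply/implyP => hij.
  rewrite !mxE hA; last by apply/eqP => hj; rewrite hj in hij.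
  case: (i =P j) hij => [->|hn _]; rewrite ?ltnn //=.
  have -> : (j == i) = false by apply/eqP => e; apply: hn.
  by rewrite mulr0n subr0.
rewrite !big_ord_recl big_ord0 !mxE /= mulr1.
rewrite (hA (lift ord0 ord0)) // (hA (lift ord0 (lift ord0 ord0))) //.
rewrite !mulr1n !sub0r !mulf_eq0 !oppr_eq0 orbb subr_eq0.
by rewrite orbC [A _ _ == l]eq_sym.
Qed.

Theorem proposition1 (R : rcfType)
  (kappa rho pi1 pi2 gamma alpha xi1 xi2 delta1 delta2 eta N : R)
  (hkappa : 0 < kappa) (hrho : 0 < rho) (hpi1 : 0 < pi1) (hpi2 : 0 < pi2)
  (hgamma : 0 < gamma) (halpha : 0 < alpha) (hxi1 : 0 < xi1) (hxi2 : 0 < xi2)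
  (hdelta1 : 0 <= delta1) (hdelta2 : 0 <= delta2)
  (heta0 : 0 <= eta) (heta1 : eta <= 1) (hN : 0 < N) :
  let tau1 := 1 / (xi1 + delta1) in
  let tau2 := 1 / (xi2 + delta2) in
  let phi1 := delta1 / (xi1 + delta1) in
  let phi2 := delta2 / (xi2 + delta2) in
  is_R0 kappa rho pi1 pi2 gamma alpha eta xi1 xi2 delta1 delta2 N
    (alpha * kappa * rho * N / gamma *
      (pi1 * tau1 * ((eta + (1 - eta) * phi2) / (1 - phi1 * phi2)) +
       pi2 * tau2 * (((1 - eta) + eta * phi1) / (1 - phi1 * phi2)))).
Proof.
move=> tau1 tau2 phi1 phi2.
rewrite /is_R0.
set Aa := xi1 + delta1. set Bb := xi2 + delta2.
set D := Aa * Bb - delta1 * delta2.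
have hAa : 0 < Aa by rewrite /Aa; lra.
have hBb : 0 < Bb by rewrite /Bb; lra.
have hD : 0 < D.
  have -> : D = xi1 * xi2 + xi1 * delta2 + delta1 * xi2 by rewrite /D /Aa /Bb; ring.
  by rewrite -addrA ltr_wpDr // ?mulr_gt0 // addr_ge0 // mulr_ge0 // ltW.
have hAa0 : Aa != 0 by rewrite gt_eqF.
have hBb0 : Bb != 0 by rewrite gt_eqF.
have hD0 : D != 0 by rewrite gt_eqF.
have hg0 : gamma != 0 by rewrite gt_eqF.
pose c1 := alpha * (Bb * eta + delta2 * (1 - eta)) / (gamma * D).
pose c2 := alpha * (delta1 * eta + Aa * (1 - eta)) / (gamma * D).
pose W : 'M[R]_3 := \matrix_(i < 3, j < 3)
    match nat_of_ord i, nat_of_ord j with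
    | 0, 0 => 1 / gamma
    | 1, 0 => c1
    | 1, 1 => Bb / D
    | 1, 2 => delta2 / D
    | 2, 0 => c2
    | 2, 1 => delta1 / D
    | 2, 2 => Aa / D
    | _, _ => 0
    end.
have hVW : Vmx gamma alpha eta xi1 xi2 delta1 delta2 *m W = 1%:M.
  { apply/matrixP => i j; rewrite !mxE !big_ord_recl big_ord0 !mxE /=.
  case: i => [[|[|[|?]]] ?] //; case: j => [[|[|[|?]]] ?] //=.
all: rewrite /c1 /c2 -/Aa -/Bb.
all: try (field; rewrite ?hD0 ?hg0 ?mulf_neq0 //).
all: by rewrite /D; field; rewrite -/D ?hD0 ?hg0. }
have hU := (mulmx1_unit hVW).1.
have hinv : invmx (Vmx gamma alpha eta xi1 xi2 delta1 delta2) = W.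
  by have := mulKmx hU W; rewrite hVW mulmx1.
rewrite hinv.
set r := (X in is_spectral_radius _ X).
have hc1 : 0 <= c1.
  rewrite /c1; apply: divr_ge0; last by apply: mulr_ge0; exact: ltW.
  apply: mulr_ge0; first exact: ltW.
  apply: addr_ge0; apply: mulr_ge0; rewrite ?subr_ge0 //; exact: ltW.
have hc2 : 0 <= c2.
  rewrite /c2; apply: divr_ge0; last by apply: mulr_ge0; exact: ltW.
  apply: mulr_ge0; first exact: ltW.
  apply: addr_ge0; apply: mulr_ge0; rewrite ?subr_ge0 //; exact: ltW.
have hM00 : (Fmx kappa rho pi1 pi2 N *m W) 0 0 = kappa * rho * N * pi1 * c1 + kappa * rho * N * pi2 * c2.
  rewrite !mxE !big_ord_recl big_ord0 !mxE /=.
  by rewrite mul0r add0r addr0.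
have hr : r = kappa * rho * N * pi1 * c1 + kappa * rho * N * pi2 * c2.
  rewrite /r /tau1 /tau2 /phi1 /phi2 -/Aa -/Bb.
  have -> : 1 - delta1 / Aa * (delta2 / Bb) = D / (Aa * Bb) by rewrite /D; field; rewrite hAa0 hBb0.
  rewrite /c1 /c2; field.
  by rewrite hD0 hg0 hAa0 hBb0.
have hr0 : 0 <= r.
  rewrite hr addr_ge0 // mulr_ge0 // ?mulr_ge0 // ltW //.
have hM : forall i j, i != 0 -> cmx (Fmx kappa rho pi1 pi2 N *m W) i j = 0.
  move=> i j; rewrite !mxE !big_ord_recl big_ord0 !mxE /=.
  case: i => [[|[|[|?]]] ?] //= _; by rewrite !mul0r !addr0.
have hC00 : cmx (Fmx kappa rho pi1 pi2 N *m W) 0 0 = (r%:C)%C.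
  by rewrite /cmx mxE hM00 hr.
split.
  exists (r%:C)%C; first by rewrite eig_row0 // hC00 eqxx orbT.
  by rewrite ger0_norm // ler0c.
move=> l; rewrite eig_row0 // hC00 => /orP[]/eqP->.
  by rewrite normr0 ler0c.
by rewrite ger0_norm // ler0c.
Qed.
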